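(* Let $\mathfrak k$ be a Lie algebra over a field $\mathbb K$ with $2\in\mathbb K^\times$. The maps $\alpha_2,\beta_1,\gamma,\alpha_3,\beta_2$ described below are well-defined linear maps and the sequence $$\{0\}\to H^2(\mathfrak k)\xrightarrow{\alpha_2}H^1(\mathfrak k,\mathfrak k^* )\xrightarrow{\beta_1}\mathrm{Sym}^2(\mathfrak k)^{\mathfrak k}\xrightarrow{\gamma}H^3(\mathfrak k)\xrightarrow{\alpha_3}H^2(\mathfrak k,\mathfrak k^* )\xrightarrow{\beta_2}H^1(\mathfrak k,\mathrm{Sym}^2(\mathfrak k))$$ is exact.
   Context: $H^p(\mathfrak k,\mathfrak a)$ denotes Chevalley–Eilenberg cohomology with coefficients in a $\mathfrak k$-module $\mathfrak a$, and $H^p(\mathfrak k)=H^p(\mathfrak k,\mathbb K)$ with trivial module. $\mathfrak k^*$ is the coadjoint module: $(x.\lambda)(y)=-\lambda([x,y])$. $\mathrm{Sym}^2(\mathfrak k)$ is the space of symmetric bilinear forms on $\mathfrak k$ with $(x.\kappa)(y,z)=-\kappa([x,y],z)-\kappa(y,[x,z])$; $\mathrm{Sym}^2(\mathfrak k)^{\mathfrak k}$ is the space of invariant ones. Definitions: $\alpha_p([\omega])=[\tilde\alpha_p\omega]$ with $(\tilde\alpha_p\omega)(x_1,\dots,x_{p-1})(y)=\omega(x_1,\dots,x_{p-1},y)$. With $S:C^1(\mathfrak k,\mathfrak k^* )\to\mathrm{Sym}^2(\mathfrak k)$, $S(\eta)(y,z)=\eta(y)(z)+\eta(z)(y)$: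 $\beta_1([\omega])=S(\omega)$ for $\omega\in Z^1(\mathfrak k,\mathfrak k^* )$, and $\beta_2([\omega])=[x\mapsto S(\omega(x,\cdot))]$ for $\omega\in Z^2(\mathfrak k,\mathfrak k^* )$. $\gamma(\kappa)=[\Gamma(\kappa)]$ with $\Gamma(\kappa)(x,y,z)=\kappa([x,y],z)$. *)

(* Defs.v *)
From HB Require Import structures.
From mathcomp Require Import all_boot all_order all_algebra.
From mathcomp Require Import functions.
Set Implicit Arguments. Unset Strict Implicit. Unset Printing Implicit Defensive.
Import Order.TTheory GRing.Theory Num.Theory.
Local Open Scope ring_scope.

Definition is_lie_bracket (K : fieldType) (L : lmodType K) (br : L -> L -> L) : Prop :=
  [/\ (forall (a : K) (x y z : L), br (a *: x + y) z = a *: br x z + br y z),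
      (forall (a : K) (x y z : L), br z (a *: x + y) = a *: br z x + br z y),
      (forall x : L, br x x = 0) &
      (forall x y z : L, br x (br y z) + br y (br z x) + br z (br x y) = 0)].

(* Chevalley–Eilenberg cochains.  A p-cochain with values in a module  *)
(* A is represented as a function f : seq L -> A, of which only the    *)
(* values on lists of length p matter; (x_1,...,x_p) is the list       *)
(* [:: x_1; ...; x_p].  The module is given by a K-vector space A, a   *)
(* predicate V carving out the actual module inside A (e.g. linear     *)
(* functionals inside L -> K) and an action act : L -> A -> A.         *)
Section Cochains.
Variables (K : fieldType) (L : lmodType K) (br : L -> L -> L).
Variable (A : lmodType K).

Definition drop_at (T : Type) (i : nat) (s : seq T) : seq T := take i s ++ drop i.+1 s.

Definition multilinear (p : nat) (f : seq L -> A) : Prop :=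
  forall (s : seq L) (i : nat) (a : K) (u v : L), size s = p -> (i < p)%N ->
    f (set_nth 0 s i (a *: u + v)) = a *: f (set_nth 0 s i u) + f (set_nth 0 s i v).

Definition alternating (p : nat) (f : seq L -> A) : Prop :=
  forall (s : seq L) (i j : nat), size s = p -> (i < j < p)%N ->
    nth 0 s i = nth 0 s j -> f s = 0.

Definition cochain (V : A -> Prop) (p : nat) (f : seq L -> A) : Prop :=
  [/\ (forall s : seq L, size s = p -> V (f s)), multilinear p f & alternating p f].

Definition dCE (act : L -> A -> A) (f : seq L -> A) : seq L -> A :=
  fun s =>
    \sum_(i < size s) (-1) ^+ i *: act (nth 0 s i) (f (drop_at i s))
  + \sum_(i < size s) \sum_(j < size s | (i < j)%N)
        (-1) ^+ (i + j) *: f (br (nth 0 s i) (nth 0 s j) :: drop_at i (drop_at j s)).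

Definition cocycle (V : A -> Prop) (act : L -> A -> A) (p : nat) (f : seq L -> A) : Prop :=
  cochain V p f /\ (forall s : seq L, size s = p.+1 -> dCE act f s = 0).

Definition coboundary (V : A -> Prop) (act : L -> A -> A) (p : nat) (f : seq L -> A) : Prop :=
  match p with
  | 0 => forall s : seq L, size s = 0%N -> f s = 0
  | q.+1 => exists g : seq L -> A, cochain V q g /\
              (forall s : seq L, size s = q.+1 -> f s = dCE act g s)
  end.

End Cochains.

Section Modules.
Variables (K : fieldType) (L : lmodType K) (br : L -> L -> L).

Definition triv_val (c : K^o) : Prop := True.
Definition triv_act (x : L) (c : K^o) : K^o := 0.

Definition is_linear_form (l : L -> K^o) : Prop :=
  forall (a : K) (u v : L), l (a *: u + v) = a * l u + l v.
Definition coad (x : L) (l : L -> K^o) : L -> K^o := fun y => - l (br x y).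

Definition is_sym_bilinear (kap : L -> L -> K^o) : Prop :=
  [/\ (forall y z, kap y z = kap z y),
      (forall (a : K) (u v z : L), kap (a *: u + v) z = a * kap u z + kap v z) &
      (forall (a : K) (u v y : L), kap y (a *: u + v) = a * kap y u + kap y v)].
Definition symact (x : L) (kap : L -> L -> K^o) : L -> L -> K^o :=
  fun y z => - kap (br x y) z - kap y (br x z).

Definition invariant_sym (kap : L -> L -> K^o) : Prop :=
  is_sym_bilinear kap /\ forall x : L, symact x kap = 0.

Definition alpha_t (w : seq L -> K^o) : seq L -> (L -> K^o) :=
  fun s y => w (rcons s y).

Definition Ssym (eta : seq L -> (L -> K^o)) : L -> L -> K^o :=
  fun y z => eta [:: y] z + eta [:: z] y.

Definition beta2_t (w : seq L -> (L -> K^o)) : seq L -> (L -> L -> K^o) :=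
  fun s y z => w [:: nth 0 s 0; y] z + w [:: nth 0 s 0; z] y.

Definition Gamma (kap : L -> L -> K^o) : seq L -> K^o :=
  fun s => kap (br (nth 0 s 0) (nth 0 s 1)) (nth 0 s 2).

End Modules.

Section CE.
Variables (K : fieldType) (L : lmodType K) (br : L -> L -> L).
Definition Z_triv p (w : seq L -> K^o) := cocycle br (@triv_val K) (@triv_act K L) p w.
Definition B_triv p (w : seq L -> K^o) := coboundary br (@triv_val K) (@triv_act K L) p w.
Definition Z_dual p (w : seq L -> (L -> K^o)) := cocycle br (@is_linear_form K L) (coad br) p w.
Definition B_dual p (w : seq L -> (L -> K^o)) := coboundary br (@is_linear_form K L) (coad br) p w.
Definition Z_sym p (w : seq L -> (L -> L -> K^o)) := cocycle br (@is_sym_bilinear K L) (symact br) p w.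
Definition B_sym p (w : seq L -> (L -> L -> K^o)) := coboundary br (@is_sym_bilinear K L) (symact br) p w.
End CE.

(* Main.v *)
Require Import Defs.
From HB Require Import structures.
From mathcomp Require Import all_boot all_order all_algebra.
From mathcomp Require Import functions.
From mathcomp Require Import boolp.
From mathcomp Require Import ring.
Import Order.TTheory GRing.Theory Num.Theory.
Local Open Scope ring_scope.

Module Aux.
Set Implicit Arguments. Unset Strict Implicit. Unset Printing Implicit Defensive.

Lemma lcs (R : pzRingType) (E k X M : R) : E = 0 -> X = M + k * E -> X = M.
Proof. by move=> -> ->; rewrite mulr0 addr0. Qed.

Ltac lcomb_ H k := refine (lcs (k := k) H _).
Tactic Notation "lcomb" constr(H) uconstr(k) := lcomb_ H k.

Section Gen.
Variables (K : fieldType) (L : lmodType K) (A : lmodType K).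

Lemma linF0 (F : L -> A) : (forall a u v, F (a *: u + v) = a *: F u + F v) -> F 0 = 0.
Proof.
move=> H; have E := H 1 0 0; rewrite !scale1r !addr0 in E.
by apply: (addrI (F 0)); rewrite addr0 -E.
Qed.
Lemma linFN (F : L -> A) : (forall a u v, F (a *: u + v) = a *: F u + F v) ->
  forall u, F (- u) = - F u.
Proof.
move=> H u; have := H (-1) u 0; rewrite addr0 (linF0 H) addr0 !scaleN1r //.
Qed.
Lemma linFD (F : L -> A) : (forall a u v, F (a *: u + v) = a *: F u + F v) ->
  forall u v, F (u + v) = F u + F v.
Proof. by move=> H u v; have := H 1 u v; rewrite !scale1r. Qed.
Lemma linFZ (F : L -> A) : (forall a u v, F (a *: u + v) = a *: F u + F v) ->
  forall a u, F (a *: u) = a *: F u.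
Proof. by move=> H a u; have := H a u 0; rewrite addr0 (linF0 H) addr0. Qed.

Implicit Types f : seq L -> A.

Lemma sall0 (P : seq L -> Prop) : P [::] -> forall s, size s = 0%N -> P s.
Proof. by move=> H [|? ?] //= _. Qed.
Lemma sall1 (P : seq L -> Prop) : (forall x, P [::x]) -> forall s, size s = 1%N -> P s.
Proof. by move=> H [|x [|? ?]] //= _; apply: H. Qed.
Lemma sall2 (P : seq L -> Prop) : (forall x y, P [::x;y]) -> forall s, size s = 2%N -> P s.
Proof. by move=> H [|x [|y [|? ?]]] //= _; apply: H. Qed.
Lemma sall3 (P : seq L -> Prop) : (forall x y z, P [::x;y;z]) -> forall s, size s = 3%N -> P s.
Proof. by move=> H [|x [|y [|z [|? ?]]]] //= _; apply: H. Qed.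
Lemma sall4 (P : seq L -> Prop) : (forall x y z u, P [::x;y;z;u]) -> forall s, size s = 4%N -> P s.
Proof. by move=> H [|x [|y [|z [|u [|? ?]]]]] //= _; apply: H. Qed.

Lemma ml0I f : multilinear 0 f.
Proof. by []. Qed.
Lemma ml1I f : (forall a u v, f [:: a *: u + v] = a *: f [:: u] + f [:: v]) -> multilinear 1 f.
Proof. by move=> H s [|i] a u v //; case: s => [|x [|? ?]] //= _ _; apply: H. Qed.
Lemma ml1E f : multilinear 1 f -> forall a u v, f [:: a *: u + v] = a *: f [:: u] + f [:: v].
Proof. by move=> H a u v; apply: (H [:: u] 0%N). Qed.
Lemma ml2I f : (forall a u v y, f [:: a *: u + v; y] = a *: f [:: u; y] + f [:: v; y]) ->
  (forall a u v x, f [:: x; a *: u + v] = a *: f [:: x; u] + f [:: x; v]) -> multilinear 2 f.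
Proof.
move=> H1 H2 s [|[|i]] a u v //; case: s => [|x [|y [|? ?]]] //= _ _; by [apply: H1 | apply: H2].
Qed.
Lemma ml2E1 f : multilinear 2 f -> forall a u v y, f [:: a *: u + v; y] = a *: f [:: u; y] + f [:: v; y].
Proof. by move=> H a u v y; apply: (H [:: u; y] 0%N). Qed.
Lemma ml2E2 f : multilinear 2 f -> forall a u v x, f [:: x; a *: u + v] = a *: f [:: x; u] + f [:: x; v].
Proof. by move=> H a u v x; apply: (H [:: x; u] 1%N). Qed.
Lemma ml3I f : (forall a u v y z, f [:: a *: u + v; y; z] = a *: f [:: u; y; z] + f [:: v; y; z]) ->
  (forall a u v x z, f [:: x; a *: u + v; z] = a *: f [:: x; u; z] + f [:: x; v; z]) ->
  (forall a u v x y, f [:: x; y; a *: u + v] = a *: f [:: x; y; u] + f [:: x; y; v]) ->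
  multilinear 3 f.
Proof.
move=> H1 H2 H3 s [|[|[|i]]] a u v //; case: s => [|x [|y [|z [|? ?]]]] //= _ _; by [apply: H1 | apply: H2 | apply: H3].
Qed.
Lemma ml3E1 f : multilinear 3 f -> forall a u v y z, f [:: a *: u + v; y; z] = a *: f [:: u; y; z] + f [:: v; y; z].
Proof. by move=> H a u v y z; apply: (H [:: u; y; z] 0%N). Qed.
Lemma ml3E2 f : multilinear 3 f -> forall a u v x z, f [:: x; a *: u + v; z] = a *: f [:: x; u; z] + f [:: x; v; z].
Proof. by move=> H a u v x z; apply: (H [:: x; u; z] 1%N). Qed.
Lemma ml3E3 f : multilinear 3 f -> forall a u v x y, f [:: x; y; a *: u + v] = a *: f [:: x; y; u] + f [:: x; y; v].
Proof. by move=> H a u v x y; apply: (H [:: x; y; u] 2%N). Qed.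

Lemma alt0I f : alternating 0 f.
Proof. by move=> s i j _ /andP[_]; rewrite ltn0. Qed.
Lemma alt1I f : alternating 1 f.
Proof. by move=> s i [|[|j]] _ /andP[] //; rewrite ltn0. Qed.
Lemma alt2I f : (forall x, f [:: x; x] = 0) -> alternating 2 f.
Proof.
move=> H s i j; case: s => [|x [|y [|? ?]]] //= _; case: i j => [|[|i]] [|[|[|j]]] //=; rewrite ?andbF // => _ ->; exact: H.
Qed.
Lemma alt2E f : alternating 2 f -> forall x, f [:: x; x] = 0.
Proof. by move=> H x; apply: (H _ 0%N 1%N). Qed.
Lemma alt3I f : (forall x z, f [:: x; x; z] = 0) -> (forall x y, f [:: x; y; x] = 0) ->
  (forall x y, f [:: x; y; y] = 0) -> alternating 3 f.
Proof.
move=> H1 H2 H3 s i j; case: s => [|x [|y [|z [|? ?]]]] //= _;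
case: i j => [|[|[|i]]] [|[|[|[|j]]]] //=; rewrite ?andbF // => _ ->; by [apply: H1 | apply: H2 | apply: H3].
Qed.
Lemma alt3E1 f : alternating 3 f -> forall x z, f [:: x; x; z] = 0.
Proof. by move=> H x z; apply: (H _ 0%N 1%N). Qed.
Lemma alt3E2 f : alternating 3 f -> forall x y, f [:: x; y; x] = 0.
Proof. by move=> H x y; apply: (H _ 0%N 2%N). Qed.
Lemma alt3E3 f : alternating 3 f -> forall x y, f [:: x; y; y] = 0.
Proof. by move=> H x y; apply: (H _ 1%N 2%N). Qed.


Section Slots.
Variable f : seq L -> A.
Lemma ml1D (H : multilinear 1 f) u v : f [:: u + v] = f [:: u] + f [:: v].
Proof. exact: (linFD (F := fun u => f [:: u]) (ml1E H)). Qed.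
Lemma ml1N (H : multilinear 1 f) u : f [:: - u] = - f [:: u].
Proof. exact: (linFN (F := fun u => f [:: u]) (ml1E H)). Qed.
Lemma ml10 (H : multilinear 1 f) : f [:: 0] = 0.
Proof. exact: (linF0 (F := fun u => f [:: u]) (ml1E H)). Qed.
Lemma ml1Z (H : multilinear 1 f) a u : f [:: a *: u] = a *: f [:: u].
Proof. exact: (linFZ (F := fun u => f [:: u]) (ml1E H)). Qed.
Lemma ml2D1 (H : multilinear 2 f) u v y : f [:: u + v; y] = f [:: u; y] + f [:: v; y].
Proof. exact: (linFD (F := fun u => f [:: u; y]) (fun a u v => ml2E1 H a u v y)). Qed.
Lemma ml2D2 (H : multilinear 2 f) u v x : f [:: x; u + v] = f [:: x; u] + f [:: x; v].
Proof. exact: (linFD (F := fun u => f [:: x; u]) (fun a u v => ml2E2 H a u v x)). Qed.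
Lemma ml2N1 (H : multilinear 2 f) u y : f [:: - u; y] = - f [:: u; y].
Proof. exact: (linFN (F := fun u => f [:: u; y]) (fun a u v => ml2E1 H a u v y)). Qed.
Lemma ml2N2 (H : multilinear 2 f) u x : f [:: x; - u] = - f [:: x; u].
Proof. exact: (linFN (F := fun u => f [:: x; u]) (fun a u v => ml2E2 H a u v x)). Qed.
Lemma ml2_01 (H : multilinear 2 f) y : f [:: 0; y] = 0.
Proof. exact: (linF0 (F := fun u => f [:: u; y]) (fun a u v => ml2E1 H a u v y)). Qed.
Lemma ml2_02 (H : multilinear 2 f) x : f [:: x; 0] = 0.
Proof. exact: (linF0 (F := fun u => f [:: x; u]) (fun a u v => ml2E2 H a u v x)). Qed.
Lemma ml3D1 (H : multilinear 3 f) u v y z : f [:: u + v; y; z] = f [:: u; y; z] + f [:: v; y; z].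
Proof. exact: (linFD (F := fun u => f [:: u; y; z]) (fun a u v => ml3E1 H a u v y z)). Qed.
Lemma ml3D2 (H : multilinear 3 f) u v x z : f [:: x; u + v; z] = f [:: x; u; z] + f [:: x; v; z].
Proof. exact: (linFD (F := fun u => f [:: x; u; z]) (fun a u v => ml3E2 H a u v x z)). Qed.
Lemma ml3D3 (H : multilinear 3 f) u v x y : f [:: x; y; u + v] = f [:: x; y; u] + f [:: x; y; v].
Proof. exact: (linFD (F := fun u => f [:: x; y; u]) (fun a u v => ml3E3 H a u v x y)). Qed.
End Slots.

Lemma antisym2 f : multilinear 2 f -> alternating 2 f -> forall x y, f [:: y; x] = - f [:: x; y].
Proof.
move=> Hm Ha x y; apply/eqP; rewrite -subr_eq0 opprK.
have := alt2E Ha (x + y).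
rewrite ml2D1 // !ml2D2 // !(alt2E Ha) add0r addr0 addrC => ->; done.
Qed.

Lemma antisym3_12 f : multilinear 3 f -> alternating 3 f -> forall x y z, f [:: y; x; z] = - f [:: x; y; z].
Proof.
move=> Hm Ha x y z; apply/eqP; rewrite -subr_eq0 opprK.
have := alt3E1 Ha (x + y) z.
rewrite ml3D1 // !ml3D2 // !(alt3E1 Ha) add0r addr0 addrC => ->; done.
Qed.
Lemma antisym3_23 f : multilinear 3 f -> alternating 3 f -> forall x y z, f [:: x; z; y] = - f [:: x; y; z].
Proof.
move=> Hm Ha x y z; apply/eqP; rewrite -subr_eq0 opprK.
have := alt3E3 Ha x (y + z).
rewrite ml3D2 // !ml3D3 // !(alt3E3 Ha) add0r addr0 addrC => ->; done.
Qed.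
Lemma cyc3 f : multilinear 3 f -> alternating 3 f -> forall x y z, f [:: z; x; y] = f [:: x; y; z].
Proof.
move=> Hm Ha x y z; rewrite (antisym3_12 Hm Ha) (antisym3_23 Hm Ha) opprK //.
Qed.

End Gen.

Lemma scaleoE (K : fieldType) (a : K) (x : K^o) : a *: x = a * x.
Proof. by []. Qed.
Lemma fct0E (T : Type) (M : zmodType) : (0 : T -> M) = fun _ => 0.
Proof. by []. Qed.
Ltac fsimp := rewrite ?(addrfctE, opprfctE, scalrfctE, fct0E) /= ?scaleoE.

Lemma eq0 (R : zmodType) (a b : R) : a = b -> a - b = 0.
Proof. by move->; rewrite subrr. Qed.


Ltac dce_simpl :=
  rewrite /dCE /= !big_ord_recl !big_ord0 /=;
  rewrite ?(big_mkcond (fun j : 'I_ _ => _ < _)%N) /= ?big_ord_recl ?big_ord0 /= /drop_at /= /bump /=;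
  rewrite ?(exprS, expr0, mulr1, mulrN1, mulN1r, opprK, scale1r, scaleN1r, add0r, addr0).

Section DCE.
Variables (K : fieldType) (L : lmodType K) (br : L -> L -> L) (A : lmodType K).
Variable act : L -> A -> A.
Implicit Types f : seq L -> A.

Lemma dCE1 f x : dCE br act f [:: x] = act x (f [::]).
Proof. by dce_simpl. Qed.

Lemma dCE2 f x y : dCE br act f [:: x; y] = act x (f [:: y]) - act y (f [:: x]) - f [:: br x y].
Proof. by dce_simpl. Qed.

Lemma dCE3 f x y z : dCE br act f [:: x; y; z] =
  act x (f [:: y; z]) - act y (f [:: x; z]) + act z (f [:: x; y])
  - f [:: br x y; z] + f [:: br x z; y] - f [:: br y z; x].
Proof. by dce_simpl; rewrite !addrA. Qed.

Lemma dCE4 f x y z u : dCE br act f [:: x; y; z; u] =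
  act x (f [:: y; z; u]) - act y (f [:: x; z; u]) + act z (f [:: x; y; u]) - act u (f [:: x; y; z])
  - f [:: br x y; z; u] + f [:: br x z; y; u] - f [:: br x u; y; z]
  - f [:: br y z; x; u] + f [:: br y u; x; z] - f [:: br z u; x; y].
Proof. by dce_simpl; rewrite !addrA. Qed.
End DCE.

Section Spec.
Variables (K : fieldType) (L : lmodType K) (br : L -> L -> L).

Lemma dT2 (f : seq L -> K^o) x y : dCE br (@triv_act K L) f [:: x; y] = - f [:: br x y].
Proof. by rewrite dCE2 /triv_act subrr sub0r. Qed.
Lemma dT3 (f : seq L -> K^o) x y z : dCE br (@triv_act K L) f [:: x; y; z] =
  - f [:: br x y; z] + f [:: br x z; y] - f [:: br y z; x].
Proof. by rewrite dCE3 /triv_act subrr add0r sub0r. Qed.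
Lemma dT4 (f : seq L -> K^o) x y z u : dCE br (@triv_act K L) f [:: x; y; z; u] =
  - f [:: br x y; z; u] + f [:: br x z; y; u] - f [:: br x u; y; z]
  - f [:: br y z; x; u] + f [:: br y u; x; z] - f [:: br z u; x; y].
Proof. by rewrite dCE4 /triv_act subrr add0r subrr sub0r. Qed.

Lemma dD1 (f : seq L -> (L -> K^o)) x z : dCE br (coad br) f [:: x] z = - f [::] (br x z).
Proof. by rewrite dCE1. Qed.
Lemma dD2 (f : seq L -> (L -> K^o)) x y z : dCE br (coad br) f [:: x; y] z =
  f [:: x] (br y z) - f [:: y] (br x z) - f [:: br x y] z.
Proof. rewrite dCE2 !addrfctE !opprfctE /= /coad. ring. Qed.
Lemma dD3 (f : seq L -> (L -> K^o)) x y z u : dCE br (coad br) f [:: x; y; z] u =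
  - f [:: y; z] (br x u) + f [:: x; z] (br y u) - f [:: x; y] (br z u)
  - f [:: br x y; z] u + f [:: br x z; y] u - f [:: br y z; x] u.
Proof. rewrite dCE3 !addrfctE !opprfctE /= /coad. ring. Qed.
Lemma dS1 (f : seq L -> (L -> L -> K^o)) x y z : dCE br (symact br) f [:: x] y z =
  - f [::] (br x y) z - f [::] y (br x z).
Proof. by rewrite dCE1. Qed.
End Spec.

Section Spec2.
Variables (K : fieldType) (L : lmodType K) (br : L -> L -> L).
Lemma dS2 (f : seq L -> (L -> L -> K^o)) x y p q : dCE br (symact br) f [:: x; y] p q =
  - f [:: y] (br x p) q - f [:: y] p (br x q) + f [:: x] (br y p) q + f [:: x] p (br y q)
  - f [:: br x y] p q.
Proof. rewrite dCE2 !addrfctE !opprfctE /= /symact. ring. Qed.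
End Spec2.


Section LF.
Variables (K : fieldType) (L : lmodType K).
Variable l : L -> K^o.
Hypothesis Hl : is_linear_form l.
Lemma lfD u v : l (u + v) = l u + l v.
Proof. exact: (linFD (A := K^o) Hl). Qed.
Lemma lfN u : l (- u) = - l u.
Proof. exact: (linFN (A := K^o) Hl). Qed.
Lemma lf0 : l 0 = 0.
Proof. exact: (linF0 (A := K^o) Hl). Qed.
Lemma lfZ a u : l (a *: u) = a * l u.
Proof. exact: (linFZ (A := K^o) Hl). Qed.
End LF.

Section SB.
Variables (K : fieldType) (L : lmodType K).
Variable k : L -> L -> K^o.
Hypothesis Hk : is_sym_bilinear k.
Lemma kS y z : k y z = k z y. Proof. by case: Hk. Qed.
Lemma kL1 : forall a u v z, k (a *: u + v) z = a * k u z + k v z. Proof. by case: Hk. Qed.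
Lemma kL2 : forall a u v y, k y (a *: u + v) = a * k y u + k y v. Proof. by case: Hk. Qed.
Lemma kD1 u v z : k (u + v) z = k u z + k v z.
Proof. exact: (linFD (A := K^o) (F := fun u => k u z) (fun a u v => kL1 a u v z)). Qed.
Lemma kN1 u z : k (- u) z = - k u z.
Proof. exact: (linFN (A := K^o) (F := fun u => k u z) (fun a u v => kL1 a u v z)). Qed.
Lemma k01 z : k 0 z = 0.
Proof. exact: (linF0 (A := K^o) (F := fun u => k u z) (fun a u v => kL1 a u v z)). Qed.
Lemma kD2 u v z : k z (u + v) = k z u + k z v.
Proof. exact: (linFD (A := K^o) (F := fun u => k z u) (fun a u v => kL2 a u v z)). Qed.
Lemma kN2 u z : k z (- u) = - k z u.
Proof. exact: (linFN (A := K^o) (F := fun u => k z u) (fun a u v => kL2 a u v z)). Qed.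
Lemma k02 z : k z 0 = 0.
Proof. exact: (linF0 (A := K^o) (F := fun u => k z u) (fun a u v => kL2 a u v z)). Qed.
End SB.

Section LieF.
Variables (K : fieldType) (L : lmodType K) (br : L -> L -> L).
Hypothesis Hlie : is_lie_bracket br.
Lemma brL1 : forall a x y z, br (a *: x + y) z = a *: br x z + br y z. Proof. by case: Hlie. Qed.
Lemma brL2 : forall a x y z, br z (a *: x + y) = a *: br z x + br z y. Proof. by case: Hlie. Qed.
Lemma brxx x : br x x = 0. Proof. by case: Hlie. Qed.
Lemma jac x y z : br x (br y z) + br y (br z x) + br z (br x y) = 0. Proof. by case: Hlie. Qed.
Lemma brD1 u v z : br (u + v) z = br u z + br v z.
Proof. exact: (linFD (F := fun u => br u z) (fun a u v => brL1 a u v z)). Qed.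
Lemma brN1 u z : br (- u) z = - br u z.
Proof. exact: (linFN (F := fun u => br u z) (fun a u v => brL1 a u v z)). Qed.
Lemma br01 z : br 0 z = 0.
Proof. exact: (linF0 (F := fun u => br u z) (fun a u v => brL1 a u v z)). Qed.
Lemma brZ1 a u z : br (a *: u) z = a *: br u z.
Proof. exact: (linFZ (F := fun u => br u z) (fun a u v => brL1 a u v z)). Qed.
Lemma brD2 u v z : br z (u + v) = br z u + br z v.
Proof. exact: (linFD (F := fun u => br z u) (fun a u v => brL2 a u v z)). Qed.
Lemma brN2 u z : br z (- u) = - br z u.
Proof. exact: (linFN (F := fun u => br z u) (fun a u v => brL2 a u v z)). Qed.
Lemma br02 z : br z 0 = 0.
Proof. exact: (linF0 (F := fun u => br z u) (fun a u v => brL2 a u v z)). Qed.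
Lemma brZ2 a u z : br z (a *: u) = a *: br z u.
Proof. exact: (linFZ (F := fun u => br z u) (fun a u v => brL2 a u v z)). Qed.
Lemma brA x y : br y x = - br x y.
Proof.
apply/eqP; rewrite -subr_eq0 opprK; have := brxx (x + y).
by rewrite brD1 !brD2 !brxx add0r addr0 addrC => ->.
Qed.
End LieF.


Section Alpha.
Variables (K : fieldType) (L : lmodType K) (br : L -> L -> L).
Hypothesis Hlie : is_lie_bracket br.
Local Notation tv := (@triv_val K).
Local Notation ta := (@triv_act K L).
Local Notation lf := (@is_linear_form K L).

Lemma alpha_coch1 (w : seq L -> K^o) : cochain tv 2 w -> cochain lf 1 (alpha_t w).
Proof.
case=> _ Hm _; split.
- by apply: sall1 => x a u v; rewrite /alpha_t /= (ml2E2 Hm).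
- by apply: ml1I => a u v; apply: funext => y; rewrite /alpha_t /= (ml2E1 Hm).
- exact: alt1I.
Qed.

Lemma alpha_coch2 (w : seq L -> K^o) : cochain tv 3 w -> cochain lf 2 (alpha_t w).
Proof.
case=> _ Hm Ha; split.
- by apply: sall2 => x y a u v; rewrite /alpha_t /= (ml3E3 Hm).
- apply: ml2I => a u v y; apply: funext => z; rewrite /alpha_t /=.
  + by rewrite (ml3E1 Hm).
  + by rewrite (ml3E2 Hm).
- by apply: alt2I => x; apply: funext => z; rewrite /alpha_t /= (alt3E1 Ha).
Qed.

Lemma dalpha1 (g : seq L -> K^o) x z :
  dCE br (coad br) (alpha_t g) [:: x] z = dCE br ta g [:: x; z].
Proof. by rewrite dD1 dT2. Qed.

Lemma dalpha2 (w : seq L -> K^o) : multilinear 2 w -> alternating 2 w -> forall x y z,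
  dCE br (coad br) (alpha_t w) [:: x; y] z = dCE br ta w [:: x; y; z].
Proof.
move=> Hm Ha x y z; rewrite dD2 dT3 /alpha_t /=.
rewrite (antisym2 Hm Ha (br y z) x) (antisym2 Hm Ha (br x z) y); ring.
Qed.

Lemma dalpha3 (w : seq L -> K^o) : multilinear 3 w -> alternating 3 w -> forall x y z u,
  dCE br (coad br) (alpha_t w) [:: x; y; z] u = dCE br ta w [:: x; y; z; u].
Proof.
move=> Hm Ha x y z u; rewrite dD3 dT4 /alpha_t /=.
rewrite -(cyc3 Hm Ha y z (br x u)) -(cyc3 Hm Ha x z (br y u)) -(cyc3 Hm Ha x y (br z u)); ring.
Qed.

End Alpha.

Section WD.
Variables (K : fieldType) (L : lmodType K) (br : L -> L -> L).
Hypothesis Hlie : is_lie_bracket br.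
Hypothesis H2 : (2%:R : K) != 0.
Local Notation tv := (@triv_val K).
Local Notation ta := (@triv_act K L).
Local Notation lf := (@is_linear_form K L).

Lemma Ssym_bil (h : seq L -> (L -> K^o)) : (forall x, lf (h [:: x])) -> multilinear 1 h ->
  is_sym_bilinear (Ssym h).
Proof.
move=> Hv Hm; split.
- by move=> y z; rewrite /Ssym addrC.
- move=> a u v z; rewrite /Ssym (ml1E Hm) /= (Hv z). fsimp; ring.
- move=> a u v y; rewrite /Ssym (ml1E Hm) /= (Hv y). fsimp; ring.
Qed.

Lemma WD1 w : Z_triv br 2 w -> Z_dual br 1 (alpha_t w).
Proof.
case=> Hc Hd; split; first exact: alpha_coch1.
case: Hc => _ Hm Ha.
by apply: sall2 => x y; apply: funext => z; rewrite dalpha2 // Hd.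
Qed.

Lemma WD2 w : B_triv br 2 w -> B_dual br 1 (alpha_t w).
Proof.
case=> g [[_ Hm _] Hg]; exists (alpha_t g); split.
- split; [ | exact: ml0I | exact: alt0I].
  by apply: sall0 => a u v; rewrite /alpha_t /= (ml1E Hm).
- by apply: sall1 => x; apply: funext => z; rewrite dalpha1 /alpha_t /= Hg.
Qed.

Lemma WD3 e : Z_dual br 1 e -> invariant_sym br (Ssym e).
Proof.
case=> [[Hv Hm _] Hd].
have lfe x : lf (e [:: x]) by apply: Hv.
split; first exact: Ssym_bil.
have dd a b r : e [:: a] (br b r) - e [:: b] (br a r) - e [:: br a b] r = 0.
  by rewrite -(dD2 br e a b r) Hd.
move=> x; apply: funext => y; apply: funext => z /=.
rewrite /symact /Ssym.
have c1 := dd x y z; have c2 := dd x z y.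
rewrite (brA Hlie y z) (lfN (lfe x)) in c2.
fsimp; lcomb c1 1; lcomb c2 1; ring.
Qed.

Lemma WD4 e : B_dual br 1 e -> Ssym e = 0.
Proof.
case=> h [[Hv _ _] He].
apply: funext => y; apply: funext => z /=.
rewrite /Ssym (He [:: y]) // (He [:: z]) // !dD1 (brA Hlie y z) (lfN (Hv [::] erefl)).
fsimp; ring.
Qed.


Lemma inv_facts k : invariant_sym br k ->
  (forall a b c, k (br a b) c = - k b (br a c)) /\ (forall a b c, k (br a b) c = k a (br b c)).
Proof.
case=> Hk Hinv.
have I0 a b c : - k (br a b) c - k b (br a c) = 0.
  by move: (congr1 (fun F => F b c) (Hinv a)); rewrite /symact /=.
have I1 a b c : k (br a b) c = - k b (br a c).
  by lcomb (I0 a b c) (-1); ring.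
split=> // a b c; rewrite -[br a b]opprK -(brA Hlie a b) (kN1 Hk) I1 opprK //.
Qed.

Lemma WD5 k : invariant_sym br k -> Z_triv br 3 (Gamma br k).
Proof.
move=> Hki; have [I1 M] := inv_facts Hki; case: Hki => Hk Hinv.
split; first split.
- by move=> s _; rewrite /triv_val.
- apply: ml3I => a u v *; rewrite /Gamma /=.
  + by rewrite (brL1 Hlie) (kL1 Hk).
  + by rewrite (brL2 Hlie) (kL1 Hk).
  + by rewrite (kL2 Hk).
- apply: alt3I => x y; rewrite /Gamma /=.
  + by rewrite (brxx Hlie) (k01 Hk).
  + by rewrite I1 (brxx Hlie) (k02 Hk) oppr0.
  + apply: (mulfI H2); rewrite mulr0.
    have E : k (br x y) y + k (br x y) y = 0 by rewrite {1}I1 (kS Hk y) addNr.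
    lcomb E 1; ring.
- apply: sall4 => x y z u; rewrite dT4 /Gamma /=.
  rewrite (M (br x y) z u) (M (br x z) y u) (M (br x u) y z) (M (br y z) x u)
          (M (br y u) x z) (M (br z u) x y).
  rewrite (kS Hk (br y z)) (kS Hk (br y u)) (kS Hk (br z u)).
  rewrite (M x y) (M x z) (M x u).
  have J := jac Hlie y z u.
  have J0 : k x (br y (br z u)) - k x (br z (br y u)) + k x (br u (br y z)) = 0.
    have := congr1 (k x) J; rewrite !(kD2 Hk) (k02 Hk) (brA Hlie y u) (brN2 Hlie) (kN2 Hk).
    by move=> <-.
  lcomb J0 (-2%:R); ring.
Qed.

Lemma WD6 w : Z_triv br 3 w -> Z_dual br 2 (alpha_t w).
Proof.
case=> Hc Hd; split; first exact: alpha_coch2.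
case: Hc => _ Hm Ha.
by apply: sall3 => x y z; apply: funext => u; rewrite dalpha3 // Hd.
Qed.

Lemma WD7 w : B_triv br 3 w -> B_dual br 2 (alpha_t w).
Proof.
case=> g [Hc Hg]; exists (alpha_t g); split; first exact: alpha_coch1.
case: Hc => _ Hm Ha.
by apply: sall2 => x y; apply: funext => z; rewrite dalpha2 // /alpha_t /= Hg.
Qed.

Lemma beta2_coch (w : seq L -> L -> K^o) : cochain lf 2 w ->
  cochain (@is_sym_bilinear K L) 1 (beta2_t w).
Proof.
case=> Hv Hm _; split.
- apply: sall1 => x; rewrite /beta2_t /=; split.
  + by move=> y z; rewrite addrC.
  + move=> a u v z; rewrite (ml2E2 Hm) (Hv [:: x; z]) //; fsimp; ring.
  + move=> a u v y; rewrite (ml2E2 Hm) (Hv [:: x; y]) //; fsimp; ring.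
- apply: ml1I => a u v; apply: funext => y; apply: funext => z.
  rewrite /beta2_t /= !(ml2E1 Hm); fsimp; ring.
- exact: alt1I.
Qed.

Lemma WD8 w : Z_dual br 2 w -> Z_sym br 1 (beta2_t w).
Proof.
case=> Hc Hd; split; first exact: beta2_coch.
case: Hc => Hv Hm Ha.
have dd a b c r : - w [:: b; c] (br a r) + w [:: a; c] (br b r) - w [:: a; b] (br c r)
  - w [:: br a b; c] r + w [:: br a c; b] r - w [:: br b c; a] r = 0.
  by rewrite -(dD3 br w a b c r) Hd.
have wA a b r : w [:: b; a] r = - w [:: a; b] r by rewrite (antisym2 Hm Ha a b).
apply: sall2 => x y; apply: funext => p; apply: funext => q.
rewrite dS2 /beta2_t /=.
have c1 := dd x y p q; have c2 := dd x y q p.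
rewrite (wA (br x p) y) (wA (br x q) y) (wA (br y p) x) (wA (br y q) x).
rewrite (brA Hlie p q) (lfN (Hv [:: x; y] erefl)) in c2.
fsimp; lcomb c1 1; lcomb c2 1; ring.
Qed.

Lemma WD9 w : B_dual br 2 w -> B_sym br 1 (beta2_t w).
Proof.
case=> h [[Hv Hm _] Hw]; exists (fun _ => Ssym h); split.
- split; [ | exact: ml0I | exact: alt0I].
  apply: sall0; apply: Ssym_bil => // x; exact: Hv.
- apply: sall1 => x; apply: funext => y; apply: funext => z.
  rewrite dS1 /beta2_t /= !Hw // !dD2 /Ssym (brA Hlie y z) (lfN (Hv [:: x] erefl)).
  ring.
Qed.

End WD.


Section EX.
Variables (K : fieldType) (L : lmodType K) (br : L -> L -> L).
Hypothesis Hlie : is_lie_bracket br.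
Hypothesis H2 : (2%:R : K) != 0.
Local Notation tv := (@triv_val K).
Local Notation ta := (@triv_act K L).
Local Notation lf := (@is_linear_form K L).

Lemma E1 w : Z_triv br 2 w -> B_dual br 1 (alpha_t w) -> B_triv br 2 w.
Proof.
move=> _ [h [[Hv _ _] Hh]].
exists (fun s => h [::] (nth 0 s 0)); split.
- split; [by move=> s _; rewrite /triv_val | | exact: alt1I].
  apply: ml1I => a u v /=; exact: (Hv [::] erefl).
- apply: sall2 => x y; rewrite dT2 /=.
  by have := congr1 (fun F => F y) (Hh [:: x] erefl); rewrite dD1 /alpha_t /=.
Qed.

Lemma E2 e : Z_dual br 1 e ->
  (Ssym e = 0 <-> exists w, Z_triv br 2 w /\ B_dual br 1 (e - alpha_t w)).
Proof.
case=> [[Hv Hm Ha] Hd].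
have lfe x : lf (e [:: x]) by apply: Hv.
have dd a b r : e [:: a] (br b r) - e [:: b] (br a r) - e [:: br a b] r = 0.
  by rewrite -(dD2 br e a b r) Hd.
split.
- move=> HS.
  have S0 a b : e [:: a] b + e [:: b] a = 0.
    by move: (congr1 (fun F => F a b) HS); rewrite /Ssym; fsimp.
  exists (fun s => e [:: nth 0 s 0] (nth 0 s 1)); split; first split; first split.
  + by move=> s _; rewrite /triv_val.
  + apply: ml2I => a u v y /=.
    * by rewrite (ml1E Hm); fsimp.
    * by rewrite (lfe y).
  + apply: alt2I => x /=; apply: (mulfI H2); rewrite mulr0.
    by lcomb (S0 x x) 1; ring.
  + apply: sall3 => x y z; rewrite dT3 /=.
    lcomb (dd x y z) 1; lcomb (S0 (br x z) y) 1; lcomb (S0 (br y z) x) (-1); ring.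
  + exists (fun _ => fun _ => 0); split.
    * split; [ | exact: ml0I | exact: alt0I].
      by apply: sall0 => a u v; rewrite mulr0 addr0.
    * apply: sall1 => x; apply: funext => z; rewrite dD1 /alpha_t; fsimp; ring.
- case=> w [[[_ Hwm Hwa] _] [h [[Hh0 _ _] Hh]]].
  apply: funext => y; apply: funext => z; rewrite /Ssym; fsimp.
  have F a b : e [:: a] b - w [:: a; b] + h [::] (br a b) = 0.
    move: (congr1 (fun F => F b) (Hh [:: a] erefl)); rewrite dD1 /alpha_t; fsimp.
    by move/eq0; rewrite opprK.
  have F2 := F z y.
  rewrite (antisym2 Hwm Hwa y z) (brA Hlie y z) (lfN (Hh0 [::] erefl)) in F2.
  lcomb (F y z) 1; lcomb F2 1; ring.
Qed.


Lemma E3 k : invariant_sym br k ->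
  (B_triv br 3 (Gamma br k) <-> exists e, Z_dual br 1 e /\ Ssym e = k).
Proof.
move=> Hki; have [I1 M] := inv_facts Hlie Hki; case: Hki => Hk Hinv.
split.
- case=> g [[_ Hgm Hga] Hg].
  exists (fun s y => (k (nth 0 s 0) y - g [:: nth 0 s 0; y]) / 2%:R); split; first split; first split.
  + apply: sall1 => x a u v /=; rewrite (kL2 Hk) (ml2E2 Hgm); fsimp; ring.
  + apply: ml1I => a u v; apply: funext => y /=; rewrite (kL1 Hk) (ml2E1 Hgm); fsimp; ring.
  + exact: alt1I.
  + apply: sall2 => x y; apply: funext => z; rewrite dD2 /=; fsimp.
    have C := eq0 (Hg [:: x; y; z] erefl); rewrite dT3 /Gamma /= in C.
    have If := eq0 (I1 x y z).
    rewrite (antisym2 Hgm Hga (br y z) x) (antisym2 Hgm Hga (br x z) y) -(M x y z).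
    lcomb C (2%:R^-1); lcomb If (- 2%:R^-1); ring.
  + apply: funext => y; apply: funext => z /=.
    rewrite /Ssym /= (kS Hk z y) (antisym2 Hgm Hga y z); fsimp; field; exact: H2.
- case=> e [[[Hv Hm _] Hd] Hek]; subst k.
  have lfe x : lf (e [:: x]) by apply: Hv.
  have dd a b r : e [:: a] (br b r) - e [:: b] (br a r) - e [:: br a b] r = 0.
    by rewrite -(dD2 br e a b r) Hd.
  exists (fun s => e [:: nth 0 s 1] (nth 0 s 0) - e [:: nth 0 s 0] (nth 0 s 1)); split.
  + split; [by move=> s _; rewrite /triv_val | | ].
    * apply: ml2I => a u v y /=; rewrite (ml1E Hm) ?(lfe y); fsimp; ring.
    * by apply: alt2I => x /=; rewrite subrr.
  + apply: sall3 => x y z; rewrite dT3 /Gamma /Ssym /=.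
    have c2 := dd x z y; have c3 := dd y z x.
    rewrite (brA Hlie y z) (lfN (lfe x)) in c2.
    rewrite (brA Hlie x z) (lfN (lfe y)) (brA Hlie x y) (lfN (lfe z)) in c3.
    lcomb c2 (-1); lcomb c3 1; ring.
Qed.


Lemma E4 w : Z_triv br 3 w ->
  (B_dual br 2 (alpha_t w) <-> exists k, invariant_sym br k /\ B_triv br 3 (w - Gamma br k)).
Proof.
case=> [[_ Hwm Hwa] _]; split.
- case=> eta [[Hv Hm _] Heta].
  have lfe x : lf (eta [:: x]) by apply: Hv.
  have W a b c : w [:: a; b; c] - (eta [:: a] (br b c) - eta [:: b] (br a c) - eta [:: br a b] c) = 0.
    apply: eq0; move: (congr1 (fun F => F c) (Heta [:: a; b] erefl)).
    by rewrite dD2 /alpha_t /=.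
  pose k := fun a b => ((eta [:: a] b : K) + eta [:: b] a) / (2%:R : K).
  have Hki : invariant_sym br k.
    split; first split.
    + by move=> y z; rewrite /k addrC.
    + move=> a u v z; rewrite /k (ml1E Hm) (lfe z); fsimp; ring.
    + move=> a u v y; rewrite /k (ml1E Hm) (lfe y); fsimp; ring.
    + move=> x; apply: funext => y; apply: funext => z; rewrite /symact /k; fsimp.
      have W2 := W x z y.
      rewrite (antisym3_23 Hwm Hwa x y z) (brA Hlie y z) (lfN (lfe x)) in W2.
      lcomb (W x y z) (- 2%:R^-1); lcomb W2 (- 2%:R^-1); ring.
  exists k; split => //.
  have [I1 M] := inv_facts Hlie Hki.
  exists (fun s => (eta [:: nth 0 s 0] (nth 0 s 1) - eta [:: nth 0 s 1] (nth 0 s 0)) / 2%:R); split.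
  + split; [by move=> s _; rewrite /triv_val | | ].
    * apply: ml2I => a u v y /=; rewrite (ml1E Hm) ?(lfe y); fsimp; ring.
    * by apply: alt2I => x /=; rewrite subrr mul0r.
  + apply: sall3 => x y z; rewrite dT3 /Gamma; fsimp.
    have If := eq0 (I1 x y z); have Mf := eq0 (M x y z).
    rewrite /k /= in If Mf.
    rewrite /k /=. lcomb (W x y z) 1; lcomb If (-1); lcomb Mf (-1); field; exact: H2.
- case=> k [Hki [g [[_ Hgm Hga] Hg]]].
  have [I1 M] := inv_facts Hlie Hki; case: Hki => Hk _.
  exists (fun s y => k (nth 0 s 0) y + g [:: nth 0 s 0; y]); split.
  + split.
    * apply: sall1 => x a u v /=; rewrite (kL2 Hk) (ml2E2 Hgm); fsimp; ring.
    * apply: ml1I => a u v; apply: funext => y /=; rewrite (kL1 Hk) (ml2E1 Hgm); fsimp; ring.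
    * exact: alt1I.
  + apply: sall2 => x y; apply: funext => z; rewrite dD2 /alpha_t /=.
    have C := eq0 (Hg [:: x; y; z] erefl); rewrite dT3 /Gamma in C; move: C; fsimp => C.
    have If := eq0 (I1 x y z); have Mf := eq0 (M x y z).
    rewrite (antisym2 Hgm Hga (br y z) x) (antisym2 Hgm Hga (br x z) y).
    lcomb C 1; lcomb If 1; lcomb Mf 1; ring.
Qed.


Lemma E5 w : Z_dual br 2 w ->
  (B_sym br 1 (beta2_t w) <-> exists w', Z_triv br 3 w' /\ B_dual br 2 (w - alpha_t w')).
Proof.
case=> [[Hv Hm Ha] Hd].
have lfw a b : lf (w [:: a; b]) by apply: Hv.
have wA a b r : w [:: b; a] r = - w [:: a; b] r by rewrite (antisym2 Hm Ha a b).
have dd a b c r : - w [:: b; c] (br a r) + w [:: a; c] (br b r) - w [:: a; b] (br c r)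
  - w [:: br a b; c] r + w [:: br a c; b] r - w [:: br b c; a] r = 0.
  by rewrite -(dD3 br w a b c r) Hd.
split.
- case=> g [[Hs _ _] Hg].
  set sg := g [::]; have Hsg : is_sym_bilinear sg by apply: Hs.
  have B a y z : w [:: a; y] z + w [:: a; z] y - (- sg (br a y) z - sg y (br a z)) = 0.
    apply: eq0; move: (congr1 (fun F => F y z) (Hg [:: a] erefl)).
    by rewrite dS1 /beta2_t /=.
  pose h := fun (s : seq L) (y : L) => (sg (nth 0 s 0) y : K) / (2%:R : K).
  pose w' := fun s : seq L => (w [:: nth 0 s 0; nth 0 s 1] (nth 0 s 2) : K)
    - ((sg (nth 0 s 0) (br (nth 0 s 1) (nth 0 s 2)) : K) - sg (nth 0 s 1) (br (nth 0 s 0) (nth 0 s 2))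
       - sg (br (nth 0 s 0) (nth 0 s 1)) (nth 0 s 2)) / (2%:R : K).
  have Hc : cochain tv 3 w'.
    split; [by move=> s _; rewrite /triv_val | | ].
    + apply: ml3I => a u v p q; rewrite /w' /=.
      * rewrite (ml2E1 Hm) ?(brL1 Hlie) ?(kL1 Hsg) ?(kL2 Hsg); fsimp; field; exact: H2.
      * rewrite (ml2E2 Hm) ?(brL1 Hlie) ?(brL2 Hlie) ?(kL1 Hsg) ?(kL2 Hsg); fsimp; field; exact: H2.
      * rewrite (lfw p q) ?(brL2 Hlie) ?(kL2 Hsg); fsimp; field; exact: H2.
    + apply: alt3I => x y; rewrite /w' /=.
      * rewrite (alt2E Ha) (brxx Hlie) (k01 Hsg); fsimp; field; exact: H2.
      * have B' := B y x x.
        rewrite (brA Hlie x y) (kN1 Hsg) (kN2 Hsg) in B'.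
        rewrite (wA y x) (brxx Hlie) (k02 Hsg) (brA Hlie x y) (kN2 Hsg).
        lcomb B' (- 2%:R^-1); field; exact: H2.
      * rewrite (brxx Hlie) (k02 Hsg).
        lcomb (B x y y) (2%:R^-1); field; exact: H2.
  exists w'; split.
  + split => //.
    case: Hc => _ Hm' Ha'.
    apply: sall4 => x y z u; rewrite -(dalpha3 br Hm' Ha') dD3 /alpha_t /w' /=.
    have Jx : sg x (br y (br z u)) - sg x (br z (br y u)) - sg x (br (br y z) u) = 0.
      have := congr1 (sg x) (jac Hlie y z u).
      rewrite !(kD2 Hsg) (k02 Hsg) (brA Hlie y u) (brN2 Hlie) (brA Hlie (br y z) u) !(kN2 Hsg).
      by [].
    have Jy : sg y (br x (br z u)) - sg y (br z (br x u)) - sg y (br (br x z) u) = 0.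
      have := congr1 (sg y) (jac Hlie x z u).
      rewrite !(kD2 Hsg) (k02 Hsg) (brA Hlie x u) (brN2 Hlie) (brA Hlie (br x z) u) !(kN2 Hsg).
      by [].
    have Jz : sg z (br x (br y u)) - sg z (br y (br x u)) - sg z (br (br x y) u) = 0.
      have := congr1 (sg z) (jac Hlie x y u).
      rewrite !(kD2 Hsg) (k02 Hsg) (brA Hlie x u) (brN2 Hlie) (brA Hlie (br x y) u) !(kN2 Hsg).
      by [].
    have Ju : - sg (br (br y z) x) u + sg (br (br x z) y) u - sg (br (br x y) z) u = 0.
      have := congr1 (fun p => sg p u) (jac Hlie x y z).
      rewrite /= !(kD1 Hsg) (k01 Hsg) (brA Hlie (br y z) x) (brA Hlie (br x y) z) (brA Hlie x z).
      rewrite (brN2 Hlie) (brA Hlie (br x z) y) !(kN1 Hsg) opprK.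
      by [].
    lcomb (dd x y z u) 1; lcomb Jx (2%:R^-1); lcomb Jy (- 2%:R^-1); lcomb Jz (2%:R^-1);
      lcomb Ju (2%:R^-1); field; exact: H2.
  + exists h; split.
    * split.
      -- apply: sall1 => x a p q; rewrite /h /= (kL2 Hsg); fsimp; field; exact: H2.
      -- apply: ml1I => a p q; apply: funext => y; rewrite /h /= (kL1 Hsg); fsimp; field; exact: H2.
      -- exact: alt1I.
    * apply: sall2 => x y; apply: funext => z; rewrite dD2 /alpha_t /h /w'; fsimp; field; exact: H2.
- case=> w' [[[_ Hm' Ha'] _] [h [[Hh Hhm _] Hw]]].
  have lfh x : lf (h [:: x]) by apply: Hh.
  exists (fun _ => Ssym h); split.
  + split; [ | exact: ml0I | exact: alt0I].
    apply: sall0; apply: Ssym_bil => // x; exact: Hh.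
  + apply: sall1 => x; apply: funext => y; apply: funext => z.
    rewrite dS1 /beta2_t /Ssym /=.
    have F a b c : w [:: a; b] c - w' [:: a; b; c]
        - (h [:: a] (br b c) - h [:: b] (br a c) - h [:: br a b] c) = 0.
      apply: eq0; move: (congr1 (fun F => F c) (Hw [:: a; b] erefl)).
      by rewrite dD2 /alpha_t; fsimp.
    have F2 := F x z y.
    rewrite (antisym3_23 Hm' Ha' x y z) (brA Hlie y z) (lfN (lfh x)) in F2.
    lcomb (F x y z) 1; lcomb F2 1; ring.
Qed.

End EX.


End Aux.
Import Aux.

Theorem proposition7p2 (K : fieldType) (L : lmodType K) (br : L -> L -> L)
  (Hlie : is_lie_bracket br) (H2 : (2%:R : K) != 0) :
  (* --- the cochain-level maps are linear --- *)
  [/\ (forall (a : K) (w w' : seq L -> K^o),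
         alpha_t (a *: w + w') = a *: alpha_t w + alpha_t w'),
      (forall (a : K) (e e' : seq L -> (L -> K^o)),
         Ssym (a *: e + e') = a *: Ssym e + Ssym e'),
      (forall (a : K) (k k' : L -> L -> K^o),
         Gamma br (a *: k + k') = a *: Gamma br k + Gamma br k') &
      (forall (a : K) (w w' : seq L -> (L -> K^o)),
         beta2_t (a *: w + w') = a *: beta2_t w + beta2_t w')] /\
  (* --- well-definedness of alpha_2, beta_1, gamma, alpha_3, beta_2 --- *)
  [/\ [/\ (forall w, Z_triv br 2 w -> Z_dual br 1 (alpha_t w)),
           (forall w, B_triv br 2 w -> B_dual br 1 (alpha_t w)),
           (forall e, Z_dual br 1 e -> invariant_sym br (Ssym e)) &
           (forall e, B_dual br 1 e -> Ssym e = 0)],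
      (forall k, invariant_sym br k -> Z_triv br 3 (Gamma br k)),
      [/\ (forall w, Z_triv br 3 w -> Z_dual br 2 (alpha_t w)) &
           (forall w, B_triv br 3 w -> B_dual br 2 (alpha_t w))] &
      [/\ (forall w, Z_dual br 2 w -> Z_sym br 1 (beta2_t w)) &
           (forall w, B_dual br 2 w -> B_sym br 1 (beta2_t w))]] /\
  (* --- exactness --- *)
  [/\ (* at H^2(k): alpha_2 injective *)
      (forall w, Z_triv br 2 w -> B_dual br 1 (alpha_t w) -> B_triv br 2 w),
      (* at H^1(k,k^ * ): ker beta_1 = im alpha_2 *)
      (forall e, Z_dual br 1 e ->
         (Ssym e = 0 <-> exists w, Z_triv br 2 w /\ B_dual br 1 (e - alpha_t w))),
      (* at Sym^2(k)^k: ker gamma = im beta_1 *)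
      (forall k, invariant_sym br k ->
         (B_triv br 3 (Gamma br k) <-> exists e, Z_dual br 1 e /\ Ssym e = k)),
      (* at H^3(k): ker alpha_3 = im gamma *)
      (forall w, Z_triv br 3 w ->
         (B_dual br 2 (alpha_t w) <->
            exists k, invariant_sym br k /\ B_triv br 3 (w - Gamma br k))) &
      (* at H^2(k,k^ * ): ker beta_2 = im alpha_3 *)
      (forall w, Z_dual br 2 w ->
         (B_sym br 1 (beta2_t w) <->
            exists w', Z_triv br 3 w' /\ B_dual br 2 (w - alpha_t w')))].

Proof.
split.
  split.
  - by move=> *; reflexivity.
  - move=> a e e'; apply: funext => y; apply: funext => z; rewrite /Ssym; fsimp; ring.
  - by move=> *; reflexivity.
  - move=> a e e'; apply: funext => s; apply: funext => y; apply: funext => z.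
    rewrite /beta2_t; fsimp; ring.
split.
  split.
  - split.
    + by move=> w; apply: WD1.
    + by move=> w; apply: WD2.
    + by move=> e; apply: WD3.
    + by move=> e; apply: WD4.
  - by move=> k; apply: WD5.
  - split.
    + by move=> w; apply: WD6.
    + by move=> w; apply: WD7.
  - split.
    + by move=> w; apply: WD8.
    + by move=> w; apply: WD9.
split.
- by move=> w; apply: E1.
- by move=> e; apply: E2.
- by move=> k; apply: E3.
- by move=> w; apply: E4.
- by move=> w; apply: E5.
Qed.
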